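(* For every positive integer $n$ and odd $k\ge3$, $$\delta_kc_n^{\mathfrak a}=-\frac{T^k}{k}\big[n^k-(n-1)^k-1\big]c_n^{\mathfrak a}.$$
   Context: $\mathcal M^{(1)}=\mathbb Q[\zeta^{\mathfrak a}(3),\zeta^{\mathfrak a}(5),\dots]$ is the free polynomial subalgebra of depth-one motivic MZVs in $\mathcal A=\mathcal H/\zeta^{\mathfrak m}(2)\mathcal H$; $\zeta^{\mathfrak a}(k)=0$ for even $k$. For odd $k\ge3$, $\delta_k$ is the continuous $\mathbb Q((T))$-linear derivation $\partial/\partial\zeta^{\mathfrak a}(k)$ of $\mathcal M^{(1)}((T))$. $H^{\mathfrak a}(n)=(-1)^n\sum_{j\ge1}\binom{n+j-1}{n-1}\zeta^{\mathfrak a}(n+j)T^j$; $H^{\mathfrak a}(1^0)=1$, $H^{\mathfrak a}(1^n)=\frac1n\sum_{i=1}^n(-1)^{i-1}H^{\mathfrak a}(i)H^{\mathfrak a}(1^{n-i})$; $c_n^{\mathfrak a}=n\sum_{j\ge0}(n-1)^jT^jH^{\mathfrak a}(1^j)$. *)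

(* Defs.v *)
From HB Require Import structures.
From mathcomp Require Import all_boot all_order all_algebra.
Set Implicit Arguments. Unset Strict Implicit. Unset Printing Implicit Defensive.
Import Order.TTheory GRing.Theory Num.Theory.
Local Open Scope ring_scope.

(* The free polynomial algebra M1 = Q[z_3, z_5, z_7, ...], z_m standing for
   zeta^a(m).  Since multivariate polynomials are not available, an element
   is represented by a formal (unnormalised) finite sum of terms c * mon,
   where a monomial is a finite multiset of variable indices (a seq nat,
   considered up to permutation).  Two representations denote the same
   polynomial iff all their monomial coefficients [mcoef] agree ([meq]);
   M1 is the quotient of [mpoly] by [meq]. *)
Definition mono := seq nat.
Definition mpoly := seq (rat * mono).

Definition mcoef (p : mpoly) (m : mono) : rat :=
  \sum_(t <- p | perm_eq t.2 m) t.1.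
Definition meq (p q : mpoly) : Prop := forall m, mcoef p m = mcoef q m.

Definition mzero : mpoly := [::].
Definition mone : mpoly := [:: (1, [::])].
Definition madd (p q : mpoly) : mpoly := p ++ q.
Definition mscale (c : rat) (p : mpoly) : mpoly := [seq (c * t.1, t.2) | t <- p].
Definition mmul (p q : mpoly) : mpoly :=
  [seq (a.1 * b.1, a.2 ++ b.2) | a <- p, b <- q].
Definition msum (s : seq mpoly) : mpoly := flatten s.

Definition zeta_a (m : nat) : mpoly :=
  if odd m && (2 < m)%N then [:: (1, [:: m])] else mzero.

(* delta_k = d / d z_k on M1 (k odd >= 3). *)
Definition mderiv (k : nat) (p : mpoly) : mpoly :=
  [seq ((count_mem k t.2)%:R * t.1, rem k t.2) | t <- p].

(* Formal power series M1[[T]] (all series occurring here have only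
   nonnegative powers of T) : coefficient sequences. *)
Definition pser := nat -> mpoly.
Definition ps_eq (f g : pser) : Prop := forall i, meq (f i) (g i).
Definition ps_zero : pser := fun _ => mzero.
Definition ps_one : pser := fun i => if i == 0%N then mone else mzero.
Definition ps_add (f g : pser) : pser := fun i => madd (f i) (g i).
Definition ps_scale (c : rat) (f : pser) : pser := fun i => mscale c (f i).
Definition ps_mul (f g : pser) : pser :=
  fun i => msum [seq mmul (f j) (g (i - j)%N) | j <- iota 0 i.+1].
Definition ps_Tpow (k : nat) (f : pser) : pser :=
  fun i => if (k <= i)%N then f (i - k)%N else mzero.
(* continuous Q((T))-linear extension of delta_k *)
Definition ps_deriv (k : nat) (f : pser) : pser := fun i => mderiv k (f i).

Definition Ha (n : nat) : pser :=
  fun j => if j == 0%N then mzero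
           else mscale ((-1) ^+ n * ('C(n + j - 1, n - 1))%:R) (zeta_a (n + j)).

Fixpoint H1seq (n : nat) : seq pser :=
  match n with
  | 0 => [:: ps_one]
  | n'.+1 =>
      let s := H1seq n' in
      rcons s (ps_scale (n'.+1%:R)^-1
        (foldr ps_add ps_zero
          [seq ps_scale ((-1) ^+ (i - 1)) (ps_mul (Ha i) (nth ps_zero s (n'.+1 - i)))
          | i <- iota 1 n'.+1]))
  end.
Definition H1 (n : nat) : pser := nth ps_zero (H1seq n) n.

(* c_n^a = n sum_{j>=0} (n-1)^j T^j H^a(1^j); the coefficient of T^i only
   involves j <= i. *)
Definition cn (n : nat) : pser :=
  fun i => mscale n%:R
    (msum [seq mscale ((n%:R - 1) ^+ j) (H1 j (i - j)%N) | j <- iota 0 i.+1]).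

(* Main.v *)
Require Import Defs.
From HB Require Import structures.
From mathcomp Require Import all_boot all_order all_algebra generic_quotient.
From mathcomp Require Import ring zify.
Set Implicit Arguments. Unset Strict Implicit. Unset Printing Implicit Defensive.
Import Order.TTheory GRing.Theory Num.Theory.
Local Open Scope ring_scope.

Lemma mcoefE p m : mcoef p m = \sum_(t <- p) t.1 * (perm_eq t.2 m)%:R.
Proof.
rewrite /mcoef big_mkcond; apply: eq_bigr => t _.
by case: ifP => _; rewrite ?mulr1 ?mulr0.
Qed.

Definition W (p : mpoly) (g : mono -> rat) := \sum_(t <- p) t.1 * g t.2.
Definition pinv (g : mono -> rat) := forall x y, perm_eq x y -> g x = g y.

Lemma perm_sort_leq (x y : mono) : perm_eq x y = (sort leq x == sort leq y).
Proof. exact/esym/(sameP eqP (perm_sortP leq_total leq_trans anti_leq x y)). Qed.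

Lemma sort_id (x : mono) : sort leq (sort leq x) = sort leq x.
Proof. by apply: sorted_sort; [exact: leq_trans | exact: (sort_sorted leq_total)]. Qed.

Lemma W_mcoef p g (U : seq mono) : pinv g -> uniq U ->
  (forall t, t \in p -> sort leq t.2 \in U) ->
  (forall u, u \in U -> sort leq u = u) ->
  W p g = \sum_(u <- U) g u * mcoef p u.
Proof.
move=> gP Uu pU Us.
have e1 : forall t, t \in p -> g t.2 = \sum_(u <- U) (perm_eq t.2 u)%:R * g u.
  move=> t tp; rewrite (bigD1_seq (sort leq t.2)) ?pU //=.
  rewrite perm_sort_leq sort_id eqxx mul1r (gP _ (sort leq t.2)); last first.
    by rewrite perm_sort_leq sort_id.
  rewrite big_seq_cond big1 ?addr0 // => u /andP[uU uneq].
  rewrite perm_sort_leq (Us u uU) eq_sym (negPf uneq) mul0r //.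
rewrite /W big_seq (eq_bigr (fun t => t.1 * \sum_(u <- U) (perm_eq t.2 u)%:R * g u)); last first.
  by move=> t tp; rewrite e1.
rewrite -big_seq.
rewrite (eq_bigr (fun t => \sum_(u <- U) t.1 * ((perm_eq t.2 u)%:R * g u))); last by move=> t _; rewrite big_distrr.
rewrite exchange_big /=; apply: eq_bigr => u _.
rewrite mcoefE big_distrr /=; apply: eq_bigr => t _.
by rewrite [RHS]mulrC mulrA.
Qed.

Lemma meq_W p q g : meq p q -> pinv g -> W p g = W q g.
Proof.
move=> pq gP.
set U := undup [seq sort leq t.2 | t <- p ++ q].
have Uu : uniq U by apply: undup_uniq.
have Us : forall u, u \in U -> sort leq u = u.
  by move=> u; rewrite mem_undup => /mapP[t _ ->]; rewrite sort_id.
rewrite (@W_mcoef p g U) // ?(@W_mcoef q g U) //.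
- by apply: eq_bigr => u _; rewrite pq.
- by move=> t tq; rewrite mem_undup; apply/mapP; exists t; rewrite // mem_cat tq orbT.
- by move=> t tp; rewrite mem_undup; apply/mapP; exists t; rewrite // mem_cat tp.
Qed.

Lemma mcoef_cat p q m : mcoef (p ++ q) m = mcoef p m + mcoef q m.
Proof. by rewrite /mcoef big_cat. Qed.

Lemma mcoef_scale c p m : mcoef (mscale c p) m = c * mcoef p m.
Proof. by rewrite /mcoef big_map big_distrr. Qed.

Lemma mcoef_mul p q m : mcoef (mmul p q) m =
  \sum_(a <- p) \sum_(b <- q) a.1 * b.1 * (perm_eq (a.2 ++ b.2) m)%:R.
Proof. by rewrite mcoefE big_allpairs_dep. Qed.

Lemma mcoef_nil m : mcoef [::] m = 0.
Proof. by rewrite /mcoef big_nil. Qed.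

Lemma mcoef_perm p m m' : perm_eq m m' -> mcoef p m = mcoef p m'.
Proof. by move=> /permPr H; apply: eq_bigl => t; rewrite H. Qed.

Lemma meq_refl p : meq p p. Proof. by []. Qed.
Lemma meq_sym p q : meq p q -> meq q p. Proof. by move=> h m. Qed.
Lemma meq_trans p q r : meq p q -> meq q r -> meq p r.
Proof. by move=> h1 h2 m; rewrite h1. Qed.

Lemma mmulC p q : meq (mmul p q) (mmul q p).
Proof.
move=> m; rewrite !mcoef_mul exchange_big; apply: eq_bigr => b _.
apply: eq_bigr => a _; rewrite (mulrC a.1 b.1); congr (_ * _%:R).
by have /permPl -> : perm_eq (a.2 ++ b.2) (b.2 ++ a.2) by rewrite perm_catC.
Qed.

Lemma mcoef_mulW p q m : mcoef (mmul p q) m =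
  W p (fun x => \sum_(b <- q) b.1 * (perm_eq (x ++ b.2) m)%:R).
Proof.
rewrite mcoef_mul /W; apply: eq_bigr => a _; rewrite big_distrr.
by apply: eq_bigr => b _; rewrite /= mulrA.
Qed.

Lemma mmul_congl p p' q : meq p p' -> meq (mmul p q) (mmul p' q).
Proof.
move=> h m; rewrite !mcoef_mulW; apply: meq_W => // x y xy.
apply: eq_bigr => b _; congr (_ * _%:R).
by have /permPl -> : perm_eq (x ++ b.2) (y ++ b.2) by rewrite perm_cat2r.
Qed.

Lemma mmul_congr p q q' : meq q q' -> meq (mmul p q) (mmul p q').
Proof.
move=> h; apply: meq_trans (mmulC _ _) _; apply: meq_trans (mmulC _ _).
exact: mmul_congl.
Qed.

Lemma mmulA p q r : meq (mmul p (mmul q r)) (mmul (mmul p q) r).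
Proof.
move=> m.
transitivity (\sum_(a <- p) \sum_(b <- q) \sum_(c <- r)
   a.1 * b.1 * c.1 * (perm_eq (a.2 ++ b.2 ++ c.2) m)%:R).
  rewrite mcoef_mul; apply: eq_bigr => a _; rewrite {1}/mmul big_allpairs_dep /=.
  by apply: eq_bigr => b _; apply: eq_bigr => c _; rewrite /= mulrA.
rewrite mcoef_mul {1}/mmul big_allpairs_dep /=; apply: eq_bigr => a _.
by apply: eq_bigr => b _; apply: eq_bigr => c _; rewrite /= catA.
Qed.

Lemma mmulDl p p' q : meq (mmul (madd p p') q) (madd (mmul p q) (mmul p' q)).
Proof. by move=> m; rewrite /madd mcoef_cat !mcoef_mul big_cat. Qed.

Lemma madd_congl p p' q : meq p p' -> meq (madd p q) (madd p' q).
Proof. by move=> h m; rewrite /madd !mcoef_cat h. Qed.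
Lemma madd_congr p q q' : meq q q' -> meq (madd p q) (madd p q').
Proof. by move=> h m; rewrite /madd !mcoef_cat h. Qed.
Lemma maddC p q : meq (madd p q) (madd q p).
Proof. by move=> m; rewrite /madd !mcoef_cat addrC. Qed.
Lemma maddA p q r : meq (madd p (madd q r)) (madd (madd p q) r).
Proof. by move=> m; rewrite /madd catA. Qed.
Lemma madd0 p : meq (madd mzero p) p.
Proof. by []. Qed.
Lemma maddN p : meq (madd (mscale (-1) p) p) mzero.
Proof. by move=> m; rewrite /madd mcoef_cat mcoef_scale mulN1r addNr mcoef_nil. Qed.
Lemma mscale_cong c p p' : meq p p' -> meq (mscale c p) (mscale c p').
Proof. by move=> h m; rewrite !mcoef_scale h. Qed.
Lemma mmul1 p : meq (mmul mone p) p.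
Proof.
move=> m; rewrite mcoef_mul big_cons big_nil addr0 mcoefE.
by apply: eq_bigr => b _; rewrite /= mul1r.
Qed.

Definition meqb (p q : mpoly) : bool :=
  all (fun x => mcoef p x == mcoef q x) [seq t.2 | t <- p ++ q].

Lemma mcoef_out p m : (forall t, t \in p -> ~~ perm_eq t.2 m) -> mcoef p m = 0.
Proof.
move=> h; rewrite /mcoef big_seq_cond big1 // => t /andP[tp pt].
by rewrite (negPf (h t tp)) in pt.
Qed.

Lemma meqP p q : reflect (meq p q) (meqb p q).
Proof.
apply: (iffP allP) => [h m | h x _]; last by rewrite h.
case: (boolP (has (fun t => perm_eq t.2 m) (p ++ q))) => [/hasP[t tpq tm]|].
  rewrite -(mcoef_perm p tm) -(mcoef_perm q tm); apply/eqP/h.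
  by apply/mapP; exists t.
rewrite has_cat negb_or => /andP[/hasPn hp /hasPn hq].
by rewrite !mcoef_out.
Qed.

Lemma meqb_refl : reflexive meqb. Proof. by move=> p; apply/meqP. Qed.
Lemma meqb_sym : symmetric meqb.
Proof. by move=> p q; apply/meqP/meqP => h; apply: meq_sym. Qed.
Lemma meqb_trans : transitive meqb.
Proof. by move=> q p r /meqP h1 /meqP h2; apply/meqP; exact: meq_trans h1 h2. Qed.
Canonical meqb_equiv := EquivRel meqb meqb_refl meqb_sym meqb_trans.
Definition Q := {eq_quot meqb}%qT.
HB.instance Definition _ : EqQuotient _ meqb Q := EqQuotient.on Q.
HB.instance Definition _ := Choice.on Q.

Notation pi := (\pi_Q)%qT.

Lemma piQP p q : pi p = pi q <-> meq p q.
Proof.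
split => h; first by apply/meqP; apply/(@eqquotP _ meqb_equiv Q).
by apply/(@eqquotP _ meqb_equiv Q); apply/meqP.
Qed.

Lemma repr_meq p : meq (repr (pi p)) p.
Proof. by apply/piQP; rewrite reprK. Qed.

Definition qadd (x y : Q) : Q := pi (madd (repr x) (repr y)).
Definition qopp (x : Q) : Q := pi (mscale (-1) (repr x)).
Definition qmul (x y : Q) : Q := pi (mmul (repr x) (repr y)).
Definition qzero : Q := pi mzero.
Definition qone : Q := pi mone.

Lemma pi_add p q : pi (madd p q) = qadd (pi p) (pi q).
Proof.
apply/piQP; apply: meq_trans (madd_congl _ (meq_sym (repr_meq p))) _.
exact: madd_congr (meq_sym (repr_meq q)).
Qed.
Lemma pi_opp p : pi (mscale (-1) p) = qopp (pi p).
Proof. by apply/piQP; apply: mscale_cong; apply: meq_sym (repr_meq p). Qed.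
Lemma pi_mul p q : pi (mmul p q) = qmul (pi p) (pi q).
Proof.
apply/piQP; apply: meq_trans (mmul_congl _ (meq_sym (repr_meq p))) _.
exact: mmul_congr (meq_sym (repr_meq q)).
Qed.

Lemma qaddA : associative qadd.
Proof.
elim/quotW=> x; elim/quotW=> y; elim/quotW=> z.
rewrite -(pi_add y z) -(pi_add x (madd y z)) -(pi_add x y) -(pi_add (madd x y) z).
by apply/piQP; apply: maddA.
Qed.
Lemma qaddC : commutative qadd.
Proof.
elim/quotW=> x; elim/quotW=> y; rewrite -(pi_add x y) -(pi_add y x).
by apply/piQP; apply: maddC.
Qed.
Lemma qadd0 : left_id qzero qadd.
Proof. by elim/quotW=> x; rewrite -(pi_add mzero x); apply/piQP; apply: madd0. Qed.
Lemma qaddN : left_inverse qzero qopp qadd.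
Proof.
elim/quotW=> x; rewrite -pi_opp -(pi_add (mscale (-1) x) x).
by apply/piQP; apply: maddN.
Qed.

HB.instance Definition _ := GRing.isZmodule.Build Q qaddA qaddC qadd0 qaddN.

Lemma qmulA : associative qmul.
Proof.
elim/quotW=> x; elim/quotW=> y; elim/quotW=> z.
rewrite -(pi_mul y z) -(pi_mul x (mmul y z)) -(pi_mul x y) -(pi_mul (mmul x y) z).
by apply/piQP; apply: mmulA.
Qed.
Lemma qmulC : commutative qmul.
Proof.
elim/quotW=> x; elim/quotW=> y; rewrite -(pi_mul x y) -(pi_mul y x).
by apply/piQP; apply: mmulC.
Qed.
Lemma qmul1 : left_id qone qmul.
Proof. by elim/quotW=> x; rewrite -(pi_mul mone x); apply/piQP; apply: mmul1. Qed.
Lemma qmulDl : left_distributive qmul qadd.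
Proof.
elim/quotW=> x; elim/quotW=> y; elim/quotW=> z.
rewrite -(pi_add x y) -(pi_mul (madd x y) z) -(pi_mul x z) -(pi_mul y z).
by rewrite -(pi_add (mmul x z) (mmul y z)); apply/piQP; apply: mmulDl.
Qed.
Lemma qone_neq0 : qone != qzero.
Proof.
apply/eqP => /piQP /(_ [::]); rewrite mcoef_nil /mcoef big_cons big_nil /=.
by move/eqP; rewrite addr0 oner_eq0.
Qed.

HB.instance Definition _ :=
  GRing.Zmodule_isComNzRing.Build Q qmulA qmulC qmul1 qmulDl qone_neq0.

Lemma piD p q : pi (madd p q) = pi p + pi q. Proof. exact: pi_add. Qed.
Lemma piM p q : pi (mmul p q) = pi p * pi q. Proof. exact: pi_mul. Qed.
Lemma pi0 : pi mzero = 0. Proof. by []. Qed.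
Lemma pi1 : pi mone = 1. Proof. by []. Qed.

Definition cst (c : rat) : Q := pi [:: (c, [::])].

Lemma mcoef_cst c m : mcoef [:: (c, [::])] m = c * (perm_eq [::] m)%:R.
Proof. by rewrite mcoefE big_cons big_nil addr0. Qed.

Lemma pi_scale c p : pi (mscale c p) = cst c * pi p.
Proof.
rewrite -piM; apply/piQP => m; rewrite mcoef_scale mcoef_mul big_cons big_nil addr0.
by rewrite mcoefE big_distrr; apply: eq_bigr => b _; rewrite /= mulrA.
Qed.

Lemma cstD (c d : rat) : cst (c + d) = cst c + cst d.
Proof. by rewrite -piD; apply/piQP => m; rewrite /madd mcoef_cat !mcoef_cst mulrDl. Qed.
Lemma cstM (c d : rat) : cst (c * d) = cst c * cst d.
Proof.
rewrite -piM; apply/piQP => m.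
by rewrite mcoef_mul.
Qed.
Lemma cst1 : cst 1 = 1. Proof. by []. Qed.
Lemma cst0 : cst 0 = 0.
Proof. by rewrite -pi0; apply/piQP => m; rewrite mcoef_cst mul0r mcoef_nil. Qed.
Lemma cstN c : cst (- c) = - cst c.
Proof. by apply/eqP; rewrite -subr_eq0 opprK -cstD addNr cst0. Qed.

Lemma cst_zmod : zmod_morphism cst.
Proof. by move=> x y; rewrite cstD cstN. Qed.
HB.instance Definition _ := GRing.isZmodMorphism.Build rat Q cst cst_zmod.
Lemma cst_monoid : monoid_morphism cst.
Proof. by split; [exact: cst1 | exact: cstM]. Qed.
HB.instance Definition _ := GRing.isMonoidMorphism.Build rat Q cst cst_monoid.

Lemma ptrans (s1 s2 s3 : mono) : perm_eq s1 s2 -> perm_eq s2 s3 -> perm_eq s1 s3.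
Proof. by move=> /permPl ->. Qed.

Lemma perm_rem' (x : nat) (s1 s2 : mono) : perm_eq s1 s2 -> perm_eq (rem x s1) (rem x s2).
Proof.
move=> h; have hm := perm_mem h.
case: (boolP (x \in s1)) => xs1.
  have xs2 : x \in s2 by rewrite -hm.
  have h1 : perm_eq (x :: rem x s1) s1 by rewrite perm_sym perm_to_rem.
  have := ptrans (ptrans h1 h) (perm_to_rem xs2).
  by rewrite perm_cons.
have xs2 : x \notin s2 by rewrite -hm.
by rewrite !rem_id.
Qed.

Lemma rem_cat' (x : nat) (s1 s2 : mono) :
  rem x (s1 ++ s2) = if x \in s1 then rem x s1 ++ s2 else s1 ++ rem x s2.
Proof.
elim: s1 => [|y s1 IH] //=; rewrite in_cons.
case: (eqVneq y x) => [->|ne] /=; first by [].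
by rewrite IH; case: ifP.
Qed.

Lemma perm_mid (k : nat) (x y : mono) : perm_eq ((k :: x) ++ y) (x ++ k :: y).
Proof. by rewrite /= perm_sym perm_catC /= perm_cons perm_catC. Qed.

Lemma mcoef_deriv k p m : mcoef (mderiv k p) m =
  W p (fun x => (count_mem k x)%:R * (perm_eq (rem k x) m)%:R).
Proof.
by rewrite mcoefE big_map /W; apply: eq_bigr => t _ /=; rewrite mulrCA mulrA.
Qed.

Lemma mderiv_cong k p q : meq p q -> meq (mderiv k p) (mderiv k q).
Proof.
move=> h m; rewrite !mcoef_deriv; apply: meq_W => // x y xy.
rewrite (permP xy); congr (_ * _%:R).
by have /permPl -> := perm_rem' k xy.
Qed.

Definition D (k : nat) (x : Q) : Q := pi (mderiv k (repr x)).

Lemma pi_D k p : pi (mderiv k p) = D k (pi p).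
Proof. by apply/piQP; apply: mderiv_cong; apply: meq_sym (repr_meq p). Qed.

Lemma DD k x y : D k (x + y) = D k x + D k y.
Proof.
elim/quotW: x => x; elim/quotW: y => y.
by rewrite -piD -!pi_D -piD /mderiv /madd map_cat.
Qed.

Lemma D0 k : D k 0 = 0.
Proof. by rewrite -pi0 -pi_D. Qed.

Lemma Dcst k c : D k (cst c) = 0.
Proof. by rewrite -pi_D /mderiv /= mul0r -/(cst 0) cst0. Qed.

Lemma mderivM k p q : meq (mderiv k (mmul p q))
  (madd (mmul (mderiv k p) q) (mmul p (mderiv k q))).
Proof.
move=> m; rewrite /madd mcoef_cat !mcoef_mul mcoefE /mderiv big_map.
rewrite big_allpairs_dep big_map -big_split /=; apply: eq_bigr => a _.
rewrite big_map -big_split /=; apply: eq_bigr => b _ /=.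
rewrite rem_cat' count_cat natrD.
case: (boolP (k \in a.2)) => ka.
  case: (boolP (k \in b.2)) => kb; last first.
    by rewrite (count_memPn kb); ring.
  have -> : perm_eq (a.2 ++ rem k b.2) m = perm_eq (rem k a.2 ++ b.2) m.
    suff /permPl -> : perm_eq (a.2 ++ rem k b.2) (rem k a.2 ++ b.2) by [].
    apply: (@ptrans _ ((k :: rem k a.2) ++ rem k b.2)).
      by rewrite perm_cat2r perm_to_rem.
    apply: (@ptrans _ (rem k a.2 ++ (k :: rem k b.2))); last first.
      by rewrite perm_cat2l perm_sym perm_to_rem.
    exact: perm_mid.
  ring.
by rewrite (count_memPn ka); ring.
Qed.


Lemma DM k x y : D k (x * y) = D k x * y + x * D k y.
Proof.
elim/quotW: x => x; elim/quotW: y => y.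
rewrite -(piM x y) -(pi_D k (mmul x y)) -(pi_D k x) -(pi_D k y).
rewrite -(piM (mderiv k x) y) -(piM x (mderiv k y)) -piD.
by apply/piQP; apply: mderivM.
Qed.

Lemma D_sum k (I : Type) (r : seq I) (P : pred I) (F : I -> Q) :
  D k (\sum_(i <- r | P i) F i) = \sum_(i <- r | P i) D k (F i).
Proof. exact: (big_morph (D k) (DD k) (D0 k)). Qed.

Lemma DcstM k c x : D k (cst c * x) = cst c * D k x.
Proof. by rewrite DM Dcst mul0r add0r. Qed.

Lemma Dnat k (c : nat) : D k c%:R = 0.
Proof. by rewrite -(rmorph_nat cst) Dcst. Qed.

Lemma Dzeta k m : odd k -> (3 <= k)%N -> D k (pi (zeta_a m)) = (m == k)%:R.
Proof.
move=> ok k3; rewrite -pi_D /zeta_a.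
case: ifP => [/andP[om m2]|]; last first.
  move=> h; have -> : (m == k) = false.
    by apply/negbTE; apply: contraFN h => /eqP ->; rewrite ok.
  by [].
rewrite /mderiv /= addn0 mulr1; case: (m =P k) => [E|/eqP ne].
  by change (cst true%:R = true%:R); rewrite (rmorph_nat cst).
transitivity (0 : Q); last by []. rewrite -pi0; apply/piQP => x; rewrite mcoefE big_cons big_nil mcoef_nil /=. by rewrite mul0r addr0.
Qed.


Section Trunc.
Variable N : nat.

Definition cg (p q : {poly Q}) := forall s, (s < N)%N -> p`_s = q`_s.

Lemma cg_refl p : cg p p. Proof. by []. Qed.
Lemma cg_sym p q : cg p q -> cg q p. Proof. by move=> h s hs; rewrite h. Qed.
Lemma cg_trans p q r : cg p q -> cg q r -> cg p r.
Proof. by move=> h1 h2 s hs; rewrite h1 ?h2. Qed.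
Lemma cgD p p' q q' : cg p p' -> cg q q' -> cg (p + q) (p' + q').
Proof. by move=> h1 h2 s hs; rewrite !coefD h1 ?h2. Qed.
Lemma cgN p p' : cg p p' -> cg (- p) (- p').
Proof. by move=> h s hs; rewrite !coefN h. Qed.
Lemma cgM p p' q q' : cg p p' -> cg q q' -> cg (p * q) (p' * q').
Proof.
move=> h1 h2 s hs; rewrite !coefM; apply: eq_bigr => j _.
have hj : (j < N)%N by apply: leq_ltn_trans hs; rewrite -ltnS.
have hsj : (s - j < N)%N by apply: leq_ltn_trans (leq_subr _ _) hs.
by rewrite h1 // h2.
Qed.
Lemma cgMl p q q' : cg q q' -> cg (p * q) (p * q').
Proof. by move=> h; apply: cgM. Qed.
Lemma cg_sum (I : Type) (r : seq I) (P : pred I) (F G : I -> {poly Q}) :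
  (forall i, P i -> cg (F i) (G i)) ->
  cg (\sum_(i <- r | P i) F i) (\sum_(i <- r | P i) G i).
Proof.
move=> h s hs; rewrite !coef_sum; apply: eq_bigr => i Pi; exact: h.
Qed.
Lemma cg_Xn0 j p : (N <= j)%N -> cg ('X^j * p) 0.
Proof.
move=> hj s hs; rewrite coefXnM coef0.
by rewrite (leq_trans hs hj).
Qed.

Definition tr (f : pser) : {poly Q} := \poly_(s < N) pi (f s).

Lemma coef_tr f s : (s < N)%N -> (tr f)`_s = pi (f s).
Proof. by move=> hs; rewrite coef_poly hs. Qed.

Lemma cg_tr f g : (forall s, (s < N)%N -> meq (f s) (g s)) -> cg (tr f) (tr g).
Proof. by move=> h s hs; rewrite !coef_tr //; apply/piQP; apply: h. Qed.

Lemma tr_add f g : tr (ps_add f g) = tr f + tr g.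
Proof.
apply/polyP => s; rewrite coefD !coef_poly.
by case: ifP => _; rewrite ?addr0 // /ps_add piD.
Qed.

Lemma tr_scale c f : tr (ps_scale c f) = (cst c)%:P * tr f.
Proof.
apply/polyP => s; rewrite coefCM !coef_poly.
by case: ifP => _; rewrite ?mulr0 // /ps_scale pi_scale.
Qed.

Lemma pi_msum (l : seq mpoly) : pi (msum l) = \sum_(x <- l) pi x.
Proof.
elim: l => [|x l IH]; first by rewrite big_nil.
by rewrite big_cons /= -IH -piD.
Qed.

Lemma tr_mul f g : cg (tr (ps_mul f g)) (tr f * tr g).
Proof.
move=> s hs; rewrite coefM coef_tr // /ps_mul pi_msum big_map.
rewrite -(big_mkord xpredT (fun j => (tr f)`_j * (tr g)`_(s - j))).
rewrite /index_iota subn0; apply: eq_big_seq => j; rewrite mem_iota add0n => /andP[_ js].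
rewrite piM !coef_tr //; first exact: leq_ltn_trans (leq_subr _ _) hs.
exact: leq_trans js hs.
Qed.

Lemma tr_Tpow k f : cg (tr (ps_Tpow k f)) ('X^k * tr f).
Proof.
move=> s hs; rewrite coefXnM coef_tr // /ps_Tpow.
case: ltnP => hk; first by rewrite pi0.
by rewrite coef_tr //; exact: leq_ltn_trans (leq_subr _ _) hs.
Qed.
End Trunc.

Section Deriv.
Variable k : nat.
Definition Dp (p : {poly Q}) : {poly Q} := map_poly (D k) p.

Lemma coef_Dp p s : (Dp p)`_s = D k p`_s.
Proof. by rewrite coef_map_id0 // D0. Qed.

Lemma DN x : D k (- x) = - D k x.
Proof. by apply/eqP; rewrite -subr_eq0 opprK -DD addNr D0. Qed.

Lemma cg_Dp N p q : cg N p q -> cg N (Dp p) (Dp q).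
Proof. by move=> h s hs; rewrite !coef_Dp h. Qed.

Lemma DpD p q : Dp (p + q) = Dp p + Dp q.
Proof. by apply/polyP => s; rewrite coefD !coef_Dp coefD DD. Qed.
Lemma DpN p : Dp (- p) = - Dp p.
Proof. by apply/polyP => s; rewrite coefN !coef_Dp coefN DN. Qed.
Lemma Dp0 : Dp 0 = 0.
Proof. by apply/polyP => s; rewrite coef_Dp !coef0 D0. Qed.
Lemma Dp_sum (I : Type) (r : seq I) (P : pred I) (F : I -> {poly Q}) :
  Dp (\sum_(i <- r | P i) F i) = \sum_(i <- r | P i) Dp (F i).
Proof. exact: (big_morph Dp DpD Dp0). Qed.

Lemma DpM p q : Dp (p * q) = Dp p * q + p * Dp q.
Proof.
apply/polyP => s; rewrite coefD coef_Dp !coefM D_sum -big_split /=.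
by apply: eq_bigr => j _; rewrite DM !coef_Dp.
Qed.

Lemma DpC c : Dp c%:P = (D k c)%:P.
Proof. by apply/polyP => s; rewrite coef_Dp !coefC; case: ifP => _; rewrite ?D0. Qed.

Lemma DpCM c p : Dp ((cst c)%:P * p) = (cst c)%:P * Dp p.
Proof. by rewrite DpM DpC Dcst mul0r add0r. Qed.

Lemma DpXnM j p : Dp ('X^j * p) = 'X^j * Dp p.
Proof.
apply/polyP => s; rewrite coef_Dp !coefXnM; case: ifP => _; rewrite ?D0 //.
by rewrite coef_Dp.
Qed.

Lemma tr_deriv N f : tr N (ps_deriv k f) = Dp (tr N f).
Proof.
apply/polyP => s; rewrite coef_Dp !coef_poly; case: ifP => _; last by rewrite D0.
by rewrite /ps_deriv pi_D.
Qed.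
End Deriv.

Lemma size_H1seq m : size (H1seq m) = m.+1.
Proof. by elim: m => [|m IH] //=; rewrite size_rcons IH. Qed.

Lemma nth_H1seq m j : (j <= m)%N -> nth ps_zero (H1seq m) j = H1 j.
Proof.
elim: m j => [|m IH] j hj; first by move: hj; rewrite leqn0 => /eqP ->.
rewrite leq_eqVlt in hj; case/orP: hj => [/eqP -> //|hj].
by rewrite /= nth_rcons size_H1seq hj IH.
Qed.

Lemma H1seqS j : H1seq j.+1 = rcons (H1seq j) (ps_scale (j.+1%:R)^-1 (foldr ps_add ps_zero
  [seq ps_scale ((-1) ^+ (i - 1)) (ps_mul (Ha i) (nth ps_zero (H1seq j) (j.+1 - i))) | i <- iota 1 j.+1])).
Proof. by []. Qed.

Lemma H1S j : H1 j.+1 = ps_scale (j.+1%:R)^-1 (foldr ps_add ps_zero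
  [seq ps_scale ((-1) ^+ (i - 1)) (ps_mul (Ha i) (H1 (j.+1 - i))) | i <- iota 1 j.+1]).
Proof.
rewrite {1}/H1 H1seqS nth_rcons size_H1seq ltnn eqxx.
congr (ps_scale _ (foldr _ _ _)); apply/eq_in_map => i; rewrite mem_iota => /andP[i1 _].
by rewrite nth_H1seq // leq_subLR -add1n leq_add2r.
Qed.

Lemma tr_zero N : tr N ps_zero = 0.
Proof. by apply/polyP => s; rewrite coef_poly coef0; case: ifP. Qed.

Lemma tr_foldr N (l : seq pser) : tr N (foldr ps_add ps_zero l) = \sum_(f <- l) tr N f.
Proof.
elim: l => [|f l IH]; first by rewrite big_nil tr_zero.
by rewrite big_cons /= tr_add IH.
Qed.


Section Main.
Variables (k N : nat).
Hypotheses (ok : odd k) (k3 : (3 <= k)%N).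

Local Notation h i := (tr N (Ha i)).
Local Notation P j := (tr N (H1 j)).
Local Notation Dk := (Dp k).
Local Notation "c %:C" := ((cst c)%:P) (at level 2, format "c %:C").

Lemma cstC_mul (c d : rat) : (c * d)%:C = c%:C * d%:C.
Proof. by rewrite cstM polyCM. Qed.

Lemma Rec j : cg N ((j.+1%:R)%:C * P j.+1)
  (\sum_(i <- iota 1 j.+1) ((-1) ^+ (i - 1))%:C * (h i * P (j.+1 - i))).
Proof.
rewrite H1S tr_scale tr_foldr big_map mulrA -cstC_mul mulfV ?pnatr_eq0 // cst1 mul1r.
apply: cg_sum => i _; rewrite tr_scale; apply: cgMl; exact: tr_mul.
Qed.

Definition dd i : rat := if (i < k)%N then (-1) ^+ i * ('C(k.-1, i.-1))%:R else 0.

Lemma Dh i : (0 < i)%N -> cg N (Dk (h i)) ((dd i)%:C * 'X^(k - i)).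
Proof.
move=> i0 s hs; rewrite coef_Dp coef_tr // coefCM coefXn /Ha.
case: (eqVneq s 0) => [->|s0].
  rewrite D0 /dd; case: ifP => ik; last by rewrite cst0 mul0r.
  have -> : (0 == k - i)%N = false by apply/negbTE; lia.
  by rewrite mulr0.
rewrite pi_scale DcstM Dzeta // /dd.
case: ifP => ik.
  have -> : (i + s == k)%N = (s == k - i)%N by apply/idP/idP => /eqP hh; apply/eqP; lia.
  case: (eqVneq s (k - i)%N) => [->|ne]; last by rewrite !mulr0.
  by congr (cst (_ * _%:R) * _); congr 'C(_, _); lia.
have -> : (i + s == k)%N = false by apply/negbTE; lia.
by rewrite cst0 !mulr0 mul0r.
Qed.
End Main.

Lemma tri_help (V : zmodType) J i (F : nat -> V) :
  \sum_(1 <= l < (J - i).+1) F l =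
  \sum_(1 <= l < J.+1) (if (i + l <= J)%N then F l else 0).
Proof.
rewrite (@big_cat_nat _ _ _ (J - i).+1 1 J.+1) //=; last by rewrite ltnS leq_subr.
rewrite [X in _ = _ + X]big_nat_cond [X in _ = _ + X]big1 ?addr0; last first.
  by move=> l /andP[/andP[hl _] _]; case: ifP => // hh; exfalso; lia.
by apply: eq_big_nat => l /andP[hl1 hl]; case: ifP => // /negbT hh; exfalso; lia.
Qed.

Lemma tri (V : zmodType) J (G : nat -> nat -> V) :
  \sum_(1 <= i < J.+1) \sum_(1 <= l < (J - i).+1) G i l =
  \sum_(1 <= l < J.+1) \sum_(1 <= i < (J - l).+1) G i l.
Proof.
rewrite (eq_bigr (fun i => \sum_(1 <= l < J.+1) (if (i + l <= J)%N then G i l else 0)));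
  last by move=> i _; exact: tri_help.
rewrite exchange_big_nat; apply: eq_bigr => l _; rewrite tri_help.
by apply: eq_bigr => i _; rewrite addnC.
Qed.

Lemma cg_sum_in N (I : eqType) (r : seq I) (F G : I -> {poly Q}) :
  (forall i, i \in r -> cg N (F i) (G i)) ->
  cg N (\sum_(i <- r) F i) (\sum_(i <- r) G i).
Proof.
move=> h s hs; rewrite !coef_sum; apply: eq_big_seq => i ir; exact: h.
Qed.

Lemma sign_pair (l : nat) (x : rat) : (0 < l)%N -> (-1) ^+ (l - 1) * ((-1) ^+ l * x) = - x.
Proof.
case: l => // l _; rewrite subSS subn0.
have e : (-1) ^+ l * (-1) ^+ l = 1 :> rat.
  by rewrite -exprD addnn -mul2n exprM sqrrN !expr1n.
by rewrite exprS mulN1r mulNr mulrN mulrA e mul1r.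
Qed.

Lemma iota_idx (V : zmodType) J (F : nat -> V) :
  \sum_(i <- iota 1 J) F i = \sum_(1 <= i < J.+1) F i.
Proof. by rewrite /index_iota subSS subn0. Qed.

Section Main2.
Variables (k N : nat).
Hypotheses (ok : odd k) (k3 : (3 <= k)%N).

Local Notation h i := (tr N (Ha i)).
Local Notation P j := (tr N (H1 j)).
Local Notation Dk := (Dp k).
Local Notation "c %:C" := ((cst c)%:P) (at level 2, format "c %:C").

Definition a (l : nat) : rat := ('C(k, l))%:R / k%:R.

Lemma P0 : cg N (P 0) 1.
Proof.
move=> s hs; rewrite coef_tr // coefC /H1 /= /ps_one.
by case: (s == 0)%N.
Qed.

Lemma DP0 : cg N (Dk (P 0)) 0.
Proof.
apply: cg_trans (cg_Dp k P0) _.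
by rewrite -[1](rmorph1 (polyC)) DpC -cst1 Dcst.
Qed.

Lemma L3 l : (0 < l)%N -> (l < k)%N -> (-1) ^+ (l - 1) * dd k l = - (l%:R * a l).
Proof.
move=> l0 lk; rewrite /dd lk sign_pair //; congr (- _).
have e : (k * 'C(k.-1, l.-1) = l * 'C(k, l))%N by rewrite mul_bin_diag prednK.
rewrite /a mulrA -natrM -e natrM mulrC mulrA mulVf ?mul1r // pnatr_eq0; lia.
Qed.

Lemma L4 J l : (l <= J)%N -> J%:R * a l = l%:R * a l + (J - l)%:R * a l.
Proof. by move=> hl; rewrite -mulrDl -natrD subnKC. Qed.

Lemma cg_refl' p q : p = q -> cg N p q.
Proof. by move=> ->. Qed.

Lemma cg_cancel (c : rat) p q : c != 0 -> cg N (c%:C * p) (c%:C * q) -> cg N p q.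
Proof.
move=> c0 hh s hs; have := hh s hs; rewrite !coefCM => e.
have := congr1 (fun x => cst c^-1 * x) e; rewrite !mulrA -!cstM mulVf // cst1 !mul1r.
by [].
Qed.

Lemma DP j : cg N (Dk (P j))
  (- \sum_(1 <= l < j.+1 | (l < k)%N) (a l)%:C * ('X^(k - l) * P (j - l))).
Proof.
elim/ltn_ind: j => j IH.
case: j IH => [|J'] IH.
  by rewrite big_geq // oppr0; exact: DP0.
set J := J'.+1.
have h1 := cg_Dp k (@Rec N J').
rewrite DpCM in h1.
apply: (@cg_cancel (J%:R)); first by rewrite pnatr_eq0.
apply: cg_trans h1 _.
rewrite Dp_sum.
under eq_bigr do rewrite DpCM DpM mulrDr.
rewrite big_split.
set A := \sum_(i <- _) _.
set B := \sum_(i <- _) _.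
pose A' := - \sum_(1 <= l < J.+1 | (l < k)%N) (l%:R * a l)%:C * ('X^(k - l) * P (J - l)).
pose B' := - \sum_(1 <= l < J.+1 | (l < k)%N) ((J - l)%:R * a l)%:C * ('X^(k - l) * P (J - l)).
have eAB : A' + B' = J%:R%:C *
    (- \sum_(1 <= l < J.+1 | (l < k)%N) (a l)%:C * ('X^(k - l) * P (J - l))).
  rewrite /A' /B' -opprD -big_split /= mulrN big_distrr /=; congr (- _).
  rewrite big_nat_cond [RHS]big_nat_cond; apply: eq_bigr => l /andP[/andP[l1 lJ] lk].
  by rewrite -mulrDl -polyCD -cstD -L4 // cstC_mul -mulrA.
rewrite -eAB; apply: cgD.
  apply: cg_trans (@cg_sum_in N _ _ _
     (fun i => ((-1) ^+ (i - 1))%:C * ((dd k i)%:C * 'X^(k - i) * P (J - i))) _) _.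
    move=> i; rewrite mem_iota => /andP[i1 _]; apply: cgMl; apply: cgM => //.
    exact: Dh.
  rewrite iota_idx /A' (big_mkcond (fun l => (l < k)%N)) /= -sumrN.
  apply: cg_refl'; apply: eq_big_nat => i /andP[i1 iJ].
  case: ifP => ik.
    by rewrite !mulrA -cstC_mul L3 // cstN polyCN !mulNr /a mulrA.
  by rewrite /dd ik cst0 !mul0r mulr0 oppr0.
apply: cg_trans (@cg_sum_in N _ _ _
   (fun i => ((-1) ^+ (i - 1))%:C * (h i *
      - \sum_(1 <= l < (J - i).+1 | (l < k)%N) (a l)%:C * ('X^(k - l) * P (J - i - l)))) _) _.
  move=> i; rewrite mem_iota => /andP[i1 iJ]; apply: cgMl; apply: cgMl.
  by apply: IH; lia.
rewrite iota_idx.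
apply: cg_trans (cg_refl' (_ : _ = - \sum_(1 <= l < J.+1 | (l < k)%N) (a l)%:C * ('X^(k - l) *
      \sum_(1 <= i < (J - l).+1) ((-1) ^+ (i - 1))%:C * (h i * P (J - l - i))))) _.
  transitivity (- \sum_(1 <= i < J.+1) \sum_(1 <= l < (J - i).+1)
     (if (l < k)%N then ((-1) ^+ (i - 1))%:C * (h i * ((a l)%:C * ('X^(k - l) * P (J - i - l))))
      else 0)).
    rewrite -sumrN; apply: eq_bigr => i _; rewrite !mulrN; congr (- _).
    rewrite big_mkcond !big_distrr /=; apply: eq_bigr => l _.
    by case: ifP => _ //; rewrite !mulr0.
  rewrite tri; congr (- _).
  rewrite (big_mkcond (fun l => (l < k)%N)) /=; apply: eq_bigr => l _.
  case: ifP => _; last by rewrite big1.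
  rewrite !big_distrr /=; apply: eq_bigr => i _; rewrite subnAC; ring.
apply: cgN; apply: cg_sum => l lk.
have inner : cg N (\sum_(1 <= i < (J - l).+1) ((-1) ^+ (i - 1))%:C * (h i * P (J - l - i)))
    ((J - l)%:R%:C * P (J - l)).
  case e: (J - l)%N => [|m].
    by rewrite big_geq // cst0 polyC0 mul0r.
  by have := @Rec N m; rewrite iota_idx => hh; exact: cg_sym hh.
apply: cg_trans (cgMl _ (cgMl _ inner)) _.
by apply: cg_refl'; rewrite cstC_mul; ring.
Qed.

End Main2.

Section Final.
Variables (n k N : nat).
Hypotheses (ok : odd k) (k3 : (3 <= k)%N).

Local Notation P j := (tr N (H1 j)).
Local Notation Dk := (Dp k).
Local Notation "c %:C" := ((cst c)%:P) (at level 2, format "c %:C").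
Local Notation cc j := ((n%:R - 1) ^+ j : rat).
Local Notation S M := (\sum_(0 <= j < M) (cc j)%:C * ('X^j * P j)).

Lemma Ctr M : (N <= M)%N -> cg N (tr N (cn n)) ((n%:R)%:C * S M).
Proof.
move=> NM s hs; rewrite coef_tr // coefCM /cn pi_scale pi_msum big_map coef_sum.
congr (_ * _).
rewrite (@big_cat_nat _ _ _ s.+1) //; last exact: leq_trans hs NM.
rewrite [X in _ = _ + X]big_nat_cond [X in _ = _ + X]big1 ?addr0; last first.
  move=> j /andP[/andP[hj _] _]; rewrite coefCM coefXnM.
  by have -> : (s < j)%N by []; rewrite mulr0.
rewrite /index_iota subn0; apply: eq_big_seq => j; rewrite mem_iota add0n => /andP[_ js].
rewrite pi_scale coefCM coefXnM ltnNge -ltnS js /= coef_tr //.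
exact: leq_ltn_trans (leq_subr _ _) hs.
Qed.

Lemma scal : \sum_(1 <= l < k) a k l * cc l = (n%:R ^+ k - cc k - 1) / k%:R.
Proof.
have e : (n%:R : rat) = (n%:R - 1) + 1 by rewrite subrK.
rewrite [in RHS]e exprD1n -(big_mkord xpredT (fun i => cc i *+ 'C(k, i))).
rewrite big_nat_recr // big_ltn; last by lia.
rewrite expr0 bin0 binn mulr1n mulr1n.
have eT : \sum_(1 <= l < k) a k l * cc l = (\sum_(1 <= l < k) cc l *+ 'C(k, l)) / k%:R.
  by rewrite mulr_suml; apply: eq_bigr => l _; rewrite /a -mulr_natr; ring.
rewrite eT; congr (_ / _); rewrite /=.
set T := \sum_(1 <= l < k) _.
by rewrite addrK addrK addrAC subrr add0r.
Qed.
Lemma conv_sum (V : zmodType) j (F : nat -> V) :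
  \sum_(1 <= l < j.+1 | (l < k)%N) F l = \sum_(1 <= l < k | (l <= j)%N) F l.
Proof.
rewrite (@big_nat_widen _ _ _ 1 j.+1 (j.+1 + k)) ?leq_addr //.
rewrite (@big_nat_widen _ _ _ 1 k (j.+1 + k)) ?leq_addl //.
by apply: eq_bigl => l; rewrite andbC ltnS.
Qed.

Lemma shift_sum (V : zmodType) M l (G : nat -> V) : (l <= M)%N ->
  \sum_(0 <= j < M) (if (l <= j)%N then G j else 0) = \sum_(0 <= j < M - l) G (j + l).
Proof.
move=> lM; rewrite (@big_cat_nat _ _ _ l) //.
rewrite big_nat_cond big1 ?add0r; last first.
  by move=> j /andP[/andP[_ jl] _]; rewrite leqNgt jl.
rewrite -[in LHS](add0n l) big_addn /= add0r; apply: eq_bigr => j _.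
by rewrite leq_add2r.
Qed.

Lemma exch M : (k <= M)%N ->
  n%:R%:C * \sum_(0 <= j < M) (cc j)%:C * ('X^j *
     (- \sum_(1 <= l < j.+1 | (l < k)%N) (a k l)%:C * ('X^(k - l) * P (j - l))))
  = - \sum_(1 <= l < k) (a k l * cc l)%:C * ('X^k * (n%:R%:C * S (M - l))).
Proof.
move=> kM.
transitivity (- \sum_(0 <= j < M) \sum_(1 <= l < k)
  (if (l <= j)%N then n%:R%:C * ((cc j)%:C * ('X^j * ((a k l)%:C * ('X^(k - l) * P (j - l)))))
   else 0)).
  rewrite -sumrN big_distrr /=; apply: eq_bigr => j _.
  rewrite !mulrN conv_sum big_mkcond !big_distrr /=; congr (- _); apply: eq_bigr => l _.
  by case: ifP => _; rewrite ?mulr0.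
rewrite exchange_big_nat /=; congr (- _); apply: eq_big_nat => l /andP[l1 lk].
rewrite shift_sum; last by lia.
rewrite !big_distrr /=; apply: eq_bigr => j _.
have eX : 'X^k = 'X^l * 'X^(k - l) :> {poly Q} by rewrite -exprD subnKC // ltnW.
rewrite eX addnK exprD exprD cstC_mul cstC_mul; ring.
Qed.

End Final.

Unset Implicit Arguments.
Theorem mainTheorem9 (n k : nat) :
  (0 < n)%N -> odd k -> (3 <= k)%N ->
  ps_eq (ps_deriv k (cn n))
        (ps_scale (- ((n%:R ^+ k - (n%:R - 1) ^+ k - 1) / k%:R))
                  (ps_Tpow k (cn n))).
Proof.
move=> n0 ok k3 i m.
pose N := i.+1.
suff hh : cg N (tr N (ps_deriv k (cn n)))
   (tr N (ps_scale (- ((n%:R ^+ k - (n%:R - 1) ^+ k - 1) / k%:R)) (ps_Tpow k (cn n)))).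
  have := hh i (ltnSn i); rewrite !coef_tr // => /piQP; exact.
rewrite tr_deriv tr_scale.
pose M := (N + k)%N.
apply: cg_trans (cg_Dp k (@Ctr n N M (leq_addr k N))) _.
rewrite DpCM Dp_sum.
rewrite (eq_bigr (fun j => (cst ((n%:R - 1) ^+ j))%:P * ('X^j * Dp k (tr N (H1 j)))));
  last by move=> j _; rewrite DpCM DpXnM.
apply: cg_trans.
  apply: cgMl; apply: cg_sum => j _; apply: cgMl; apply: cgMl; exact: (@DP k N ok k3 j).
rewrite (exch n N ok k3); last by rewrite /M leq_addl.
apply: cg_trans.
  apply: cgN; apply: cg_sum_in => l; rewrite mem_index_iota => /andP[_ lk].
  apply: cgMl; apply: cgMl; apply: cg_sym; apply: Ctr; rewrite /M; lia.
apply: cg_trans; last first.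
  apply: cgMl; apply: cg_sym; exact: tr_Tpow.
apply: cg_refl'.
rewrite -(scal n ok k3) -big_distrl /= -mulNr; congr (_ * _).
by rewrite raddfN polyCN !raddf_sum.
Qed.
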